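(* Let $k=4$, $t\ge 2$, $m=2^t-3$, and let $n$ be an integer with $0\le n\le m$, $i=m-n$. Then in $\mathbb{F}_2[w_2,w_3,w_4]$, \[ q_iq_n+q_{i+1}q_{n-1}+(q_{i+2}+w_2q_i)q_{n-2}+(q_{i+3}+w_2q_{i+1}+w_3q_i)q_{n-3}=0, \] a homogeneous relation of degree $2^t-3$ among $q_{n-3},\dots,q_n$.
   Context: In $\mathbb{F}_2[w_2,w_3,w_4]$ ($\deg w_i=i$), $q_0=1$, $q_m=0$ for $m<0$, and $q_m=w_2q_{m-2}+w_3q_{m-3}+w_4q_{m-4}$ for $m\ge1$. *)

(* Defs.v *)
From HB Require Import structures.
From mathcomp Require Import all_boot all_order all_algebra.
From mathcomp Require Export mpoly.
Set Implicit Arguments. Unset Strict Implicit. Unset Printing Implicit Defensive.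
Import GRing.Theory.
Local Open Scope ring_scope.

Notation PR := {mpoly 'F_2[3]}.
Definition w2 : PR := 'X_(inord 0).
Definition w3 : PR := 'X_(inord 1).
Definition w4 : PR := 'X_(inord 2).

(* qstate m = (q_m, q_{m-1}, q_{m-2}, q_{m-3}), with q_j = 0 for j < 0;
   q_0 = 1 and q_{m+1} = w2 q_{m-1} + w3 q_{m-2} + w4 q_{m-3}. *)
Fixpoint qstate (m : nat) : PR * PR * PR * PR :=
  match m with
  | 0 => (1, 0, 0, 0)
  | m'.+1 =>
      let: (a, b, c, d) := qstate m' in
      (w2 * b + w3 * c + w4 * d, a, b, c)
  end.

Definition qnat (m : nat) : PR := (qstate m).1.1.1.

Definition q (m : int) : PR :=
  match m with
  | Posz k => qnat k
  | Negz _ => 0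
  end.

(* Main.v *)
Require Import Defs.
From mathcomp Require Import all_boot all_order all_algebra.
From mathcomp Require Import mpoly.
From mathcomp Require Import ring zify.
Import GRing.Theory.
Local Open Scope ring_scope.

Lemma two0 : (2%:R : PR) = 0.
Proof.
have -> : (2%:R : PR) = (2%:R : 'F_2)%:MP by rewrite rmorph_nat.
have -> : (2%:R : 'F_2) = 0 by apply/val_inj.
by rewrite rmorph0.
Qed.

Lemma char2 (L R X : PR) : L - R = 2%:R * X -> L = R.
Proof. by rewrite two0 mul0r => /eqP; rewrite subr_eq0 => /eqP. Qed.

Fixpoint rr (k : nat) : PR :=
  match k with
  | 0 | 1 | 2 | 3 => 0
  | 4 => 1
  | (((k'.+1 as a).+1 as b).+1 as c).+2 => w2 * rr c + w3 * rr b + w4 * rr a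
  end.

Lemma rrS k : rr k.+4.+1 = w2 * rr k.+3 + w3 * rr k.+2 + w4 * rr k.+1.
Proof. by []. Qed.

Lemma qstate_rr k : qstate k = (rr k.+4, rr k.+3, rr k.+2, rr k.+1).
Proof.
elim: k => [|k IH] //=.
by rewrite IH.
Qed.

Lemma qr (z : int) (k : nat) : z = k%:Z - 4 -> q z = rr k.
Proof.
move=> ->.
case: k => [|[|[|[|j]]]] //.
have -> : (j.+4%:Z - 4 = j%:Z)%R by lia.
by rewrite /= /qnat qstate_rr.
Qed.

Definition FF (a b : nat) : PR :=
  rr a.+4 * rr b.+4 + rr a.+4.+1 * rr b.+3
  + (rr a.+4.+2 + w2 * rr a.+4) * rr b.+2
  + (rr a.+4.+3 + w2 * rr a.+4.+1 + w3 * rr a.+4) * rr b.+1.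

Lemma FF_shift a b : FF a b.+1 = FF a.+1 b.
Proof.
rewrite /FF rrS (rrS a.+3).
apply: (@char2 _ _ (w2 * rr a.+4 * rr b.+3 + w3 * rr a.+4 * rr b.+2
   - w2 * rr a.+4.+2 * rr b.+1 - w3 * rr a.+4.+1 * rr b.+1)).
ring.
Qed.

Lemma FF0 a : FF a 0 = rr a.+4.
Proof. by rewrite /FF /= !mulr0 !addr0 mulr1. Qed.

Lemma FF_all a b : FF a b = rr (a + b).+4.
Proof.
elim: b a => [|b IH] a; first by rewrite FF0 addn0.
by rewrite FF_shift IH addSnnS.
Qed.

Lemma doubling K :
  rr (2 * K) = rr K.+2 ^+ 2 + w2 * rr K.+1 ^+ 2 + w4 * rr K ^+ 2 /\
  rr (2 * K).+1 = w3 * rr K.+1 ^+ 2.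
Proof.
elim/ltn_ind: K => K IH.
split.
- case: K IH => [|[|[|L]]] IH.
  + by rewrite /= !expr0n /= !mulr0 !addr0.
  + by rewrite /= !expr0n /= !mulr0 !addr0.
  + by rewrite /= !expr0n /= !mulr0 !addr0 expr1n.
  + have -> : (2 * L.+3 = (2 * L).+1.+4.+1)%N by lia.
    rewrite rrS.
    have [E2 _] := IH L.+2 ltac:(lia).
    have [E1 O1] := IH L.+1 ltac:(lia).
    have -> : ((2 * L).+1.+3 = 2 * L.+2)%N by lia.
    have -> : ((2 * L).+1.+2 = (2 * L.+1).+1)%N by lia.
    have -> : ((2 * L).+1.+1 = 2 * L.+1)%N by lia.
    rewrite E2 O1 E1 (rrS L).
    apply: (@char2 _ _ (w2 * w4 * rr L.+2 ^+ 2 - w2 * w3 * rr L.+2 * rr L.+3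
      - w2 * w4 * rr L.+3 * rr L.+1 - w3 * w4 * rr L.+2 * rr L.+1)).
    ring.
- case: K IH => [|[|L]] IH.
  + by rewrite /= !expr0n /= !mulr0.
  + by rewrite /= !expr0n /= !mulr0.
  + have -> : ((2 * L.+2).+1 = (2 * L).+4.+1)%N by lia.
    rewrite rrS.
    have [_ O1] := IH L.+1 ltac:(lia).
    have [E1 _] := IH L.+1 ltac:(lia).
    have [_ O0] := IH L ltac:(lia).
    have -> : ((2 * L).+3 = (2 * L.+1).+1)%N by lia.
    have -> : ((2 * L).+2 = 2 * L.+1)%N by lia.
    rewrite O1 E1 O0.
    apply: (@char2 _ _ (w2 * w3 * rr L.+2 ^+ 2 + w3 * w4 * rr L.+1 ^+ 2)).
    ring.
Qed.

Lemma rr_pow t : (2 <= t)%N -> rr (2 ^ t).+1 = 0.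
Proof.
elim: t => [|t IH] // ht.
case: t IH ht => [|[|t]] IH ht //.
  by rewrite /= !mulr0 !addr0.
rewrite expnS (doubling _).2 IH //.
by rewrite expr0n /= mulr0.
Qed.

Theorem mainTheorem10 (t n : nat) :
  (2 <= t)%N -> (n <= 2 ^ t - 3)%N ->
  let m : int := (2 ^ t - 3)%N in
  let i : int := m - n%:Z in
  q i * q n%:Z + q (i + 1) * q (n%:Z - 1)
  + (q (i + 2) + w2 * q i) * q (n%:Z - 2)
  + (q (i + 3) + w2 * q (i + 1) + w3 * q i) * q (n%:Z - 3) = 0.
Proof.
move=> ht hn m i.
have h4 : (4 <= 2 ^ t)%N.
  by rewrite (_ : 4 = 2 ^ 2)%N // leq_pexp2l.
subst m i.
move: hn.
set M := (2 ^ t - 3)%N => hn.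
set I := (M - n)%N.
rewrite (@qr (M%:Z - n%:Z + 1) (I.+4.+1)); last by rewrite /I; lia.
rewrite (@qr (M%:Z - n%:Z + 2) (I.+4.+2)); last by rewrite /I; lia.
rewrite (@qr (M%:Z - n%:Z + 3) (I.+4.+3)); last by rewrite /I; lia.
rewrite (@qr (M%:Z - n%:Z) (I.+4)); last by rewrite /I; lia.
rewrite (@qr (n%:Z) (n.+4)); last by lia.
rewrite (@qr (n%:Z - 1) (n.+3)); last by lia.
rewrite (@qr (n%:Z - 2) (n.+2)); last by lia.
rewrite (@qr (n%:Z - 3) (n.+1)); last by lia.
change (FF I n = 0).
rewrite FF_all /I subnK //.
have -> : (M.+4 = (2 ^ t).+1)%N by rewrite /M; lia.
exact: rr_pow.
Qed.
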